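(* Let $G$ be a group with a finite generating set $S$, equipped with the word metric $d_S$, and suppose $G$ acts transitively by isometries on a metric space $M$. Fix a basepoint $x_0 \in M$. Suppose that $M$ has asymptotic property C and that there is an integer $n \ge 0$ such that for every $R > 0$, the quasi-stabilizer $W_R(x_0)$ (with the metric restricted from $d_S$) has asymptotic dimension at most $n$. Then $G$ (with the metric $d_S$) has straight finite decomposition complexity.
   Context: The word metric on $G$ with respect to the finite generating set $S$ is $d_S(g,h) = $ the length of a shortest word in $S \cup S^{-1}$ representing $g^{-1}h$. A family $\mathcal{F}$ of subsets of a metric space $X$ is uniformly bounded if there is $R>0$ with $\mathrm{diam}(F) < R$ for all $F \in \mathcal{F}$; for $r>0$, $\mathcal{F}$ is $r$-disjoint if $d(F_1,F_2) > r$ for all distinct $F_1, F_2 \in \mathcal{F}$. A metric space $X$ has asymptotic dimension at most $n$ if for every $r>0$ there exist $n+1$ uniformly bounded, $r$-disjoint families $\mathcal{F}_0,\dots,\mathcal{F}_n$ of subsets of $X$ whose union covers $X$. A metric space $X$ has asymptotic property C if for every sequence of real numbers $0<r_0<r_1<\cdots$ there exist $m \in \mathbb{N}$ and uniformly bounded families $\mathcal{F}_0,\dots,\mathcal{F}_m$ of subsets of $X$ such that each $\mathcal{F}_i$ is $r_i$-disjoint and $\bigcup_{i=0}^m \mathcal{F}_i$ covers $X$. For a group $G$ acting by isometries on $M$, $x \in M$ and $R>0$, the $R$-quasi-stabilizer of $x$ is $W_R(x) = \{ g \in G \mid d_M(x, gx) \le R\}$. For metric families (families of metric spaces) $\mathcal{X},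 \mathcal{Y}$ and $r>0$, $\mathcal{X}$ is $r$-decomposable over $\mathcal{Y}$ if for each $X \in \mathcal{X}$ there exist $r$-disjoint families $\mathcal{U}, \mathcal{V}$ of subsets of $X$ (with the induced metrics) such that $\mathcal{U}\cup\mathcal{V}$ covers $X$ and $\mathcal{U}\cup\mathcal{V} \subseteq \mathcal{Y}$. A metric family $\mathcal{X}$ has straight finite decomposition complexity (sFDC) if for every sequence $0 \le r_1 \le r_2 \le \cdots$ of real numbers there exist $n \in \mathbb{N}$ and metric families $\mathcal{X} = \mathcal{X}_0, \mathcal{X}_1, \dots, \mathcal{X}_n$ such that for each $1 \le i \le n$, $\mathcal{X}_i$ is $r_i$-decomposable over $\mathcal{X}_{i-1}$, and $\mathcal{X}_n$ is uniformly bounded (there is a uniform bound on the diameters of its members). A single metric space $X$ has sFDC if the family $\{X\}$ does. *)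

(* Defs.v *)
From Stdlib Require Import Reals List ClassicalEpsilon.
Open Scope R_scope.

Definition is_metric {X : Type} (d : X -> X -> R) : Prop :=
  (forall x y, 0 <= d x y) /\
  (forall x y, d x y = 0 <-> x = y) /\
  (forall x y, d x y = d y x) /\
  (forall x y z, d x z <= d x y + d y z).

Definition family (X : Type) := (X -> Prop) -> Prop.

Definition diam_le {X : Type} (d : X -> X -> R) (F : X -> Prop) (B : R) : Prop :=
  forall x y, F x -> F y -> d x y <= B.

Definition unif_bounded {X : Type} (d : X -> X -> R) (Fam : family X) : Prop :=
  exists B, 0 < B /\ forall F, Fam F -> diam_le d F B.

(* r < d(F1,F2) = inf { d x y | x in F1, y in F2 } *)
Definition setdist_gt {X : Type} (d : X -> X -> R) (F1 F2 : X -> Prop) (r : R) : Prop :=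
  exists eps, 0 < eps /\ forall x y, F1 x -> F2 y -> r + eps <= d x y.

Definition same_set {X : Type} (A B : X -> Prop) : Prop := forall x, A x <-> B x.

Definition r_disjoint {X : Type} (d : X -> X -> R) (r : R) (Fam : family X) : Prop :=
  forall F1 F2, Fam F1 -> Fam F2 -> ~ same_set F1 F2 -> setdist_gt d F1 F2 r.

Definition family_in {X : Type} (A : X -> Prop) (Fam : family X) : Prop :=
  forall F, Fam F -> forall x, F x -> A x.

Definition covers_upto {X : Type} (A : X -> Prop) (n : nat) (Fams : nat -> family X) : Prop :=
  forall x, A x -> exists i F, (i <= n)%nat /\ Fams i F /\ F x.

Definition asdim_le {X : Type} (d : X -> X -> R) (A : X -> Prop) (n : nat) : Prop :=
  forall r, 0 < r ->
    exists Fams : nat -> family X,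
      (forall i, (i <= n)%nat ->
         family_in A (Fams i) /\ unif_bounded d (Fams i) /\ r_disjoint d r (Fams i)) /\
      covers_upto A n Fams.

Definition asymptotic_property_C {X : Type} (d : X -> X -> R) : Prop :=
  forall r : nat -> R, 0 < r 0%nat -> (forall i, r i < r (S i)) ->
    exists (m : nat) (Fams : nat -> family X),
      (forall i, (i <= m)%nat -> unif_bounded d (Fams i) /\ r_disjoint d (r i) (Fams i)) /\
      covers_upto (fun _ => True) m Fams.

Definition r_decomposable {X : Type} (d : X -> X -> R) (r : R) (Fam Fam' : family X) : Prop :=
  forall Y, Fam Y ->
    exists U V : family X,
      family_in Y U /\ family_in Y V /\
      r_disjoint d r U /\ r_disjoint d r V /\
      (forall y, Y y -> exists F, (U F \/ V F) /\ F y) /\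
      (forall F, U F \/ V F -> Fam' F).

(* The metric space (X,d) (i.e. the family {X}) has straight finite decomposition
   complexity. Sequence r_1 <= r_2 <= ... is r 1, r 2, ... (r 0 is unused). *)
Definition sFDC {X : Type} (d : X -> X -> R) : Prop :=
  forall r : nat -> R, 0 <= r 1%nat -> (forall i, (1 <= i)%nat -> r i <= r (S i)) ->
    exists (n : nat) (Xs : nat -> family X),
      (forall A, Xs 0%nat A <-> (forall x, A x)) /\
      (forall i, (1 <= i <= n)%nat -> r_decomposable d (r i) (Xs (i - 1)%nat) (Xs i)) /\
      unif_bounded d (Xs n).

Definition is_group {G : Type} (mul : G -> G -> G) (inv : G -> G) (e : G) : Prop :=
  (forall a b c, mul a (mul b c) = mul (mul a b) c) /\
  (forall a, mul e a = a /\ mul a e = a) /\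
  (forall a, mul (inv a) a = e /\ mul a (inv a) = e).

(* a word in S ∪ S^{-1}: letters (b, s) with s in S; b = true means s, false means s^{-1} *)
Definition is_word {G : Type} (S : list G) (w : list (bool * G)) : Prop :=
  forall l, In l w -> In (snd l) S.

Definition word_eval {G : Type} (mul : G -> G -> G) (inv : G -> G) (e : G)
  (w : list (bool * G)) : G :=
  fold_right (fun (l : bool * G) (acc : G) => mul (if fst l then snd l else inv (snd l)) acc) e w.

Definition represents {G : Type} (mul : G -> G -> G) (inv : G -> G) (e : G)
  (S : list G) (n : nat) (g : G) : Prop :=
  exists w, is_word S w /\ length w = n /\ word_eval mul inv e w = g.

Definition generates {G : Type} (mul : G -> G -> G) (inv : G -> G) (e : G)
  (S : list G) : Prop :=
  forall g, exists n, represents mul inv e S n g.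

(* length of a shortest word in S ∪ S^{-1} representing g (well defined when S generates) *)
Definition word_length {G : Type} (mul : G -> G -> G) (inv : G -> G) (e : G)
  (S : list G) (g : G) : nat :=
  epsilon (inhabits 0%nat)
    (fun n => represents mul inv e S n g /\
              forall m, represents mul inv e S m g -> (n <= m)%nat).

Definition word_metric {G : Type} (mul : G -> G -> G) (inv : G -> G) (e : G)
  (S : list G) (g h : G) : R :=
  INR (word_length mul inv e S (mul (inv g) h)).

Definition is_isometric_action {G M : Type} (mul : G -> G -> G) (e : G)
  (dM : M -> M -> R) (act : G -> M -> M) : Prop :=
  (forall x, act e x = x) /\
  (forall g h x, act (mul g h) x = act g (act h x)) /\
  (forall g x y, dM (act g x) (act g y) = dM x y).

Definition transitive_action {G M : Type} (act : G -> M -> M) : Prop :=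
  forall x y, exists g, act g x = y.

Definition quasi_stab {G M : Type} (dM : M -> M -> R) (act : G -> M -> M)
  (x : M) (Rad : R) : G -> Prop :=
  fun g => dM x (act g x) <= Rad.

(* Main.v *)
Require Import Defs.
From Stdlib Require Import Reals List Lra Lia Classical ClassicalEpsilon.
Open Scope R_scope.

Lemma grp_linv_unique {G} (mul : G->G->G) inv e (HG : is_group mul inv e) x y :
  mul x y = e -> x = inv y.
Proof.
  intros H. destruct HG as [Ha [Hid Hinv]].
  transitivity (mul x (mul y (inv y))).
  - rewrite (proj2 (Hinv y)). now rewrite (proj2 (Hid x)).
  - rewrite Ha, H. apply (proj1 (Hid _)).
Qed.

Lemma grp_inv_mul {G} (mul : G->G->G) inv e (HG : is_group mul inv e) a b :
  inv (mul a b) = mul (inv b) (inv a).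
Proof.
  symmetry. apply (grp_linv_unique mul inv e HG).
  destruct HG as [Ha [Hid Hinv]].
  rewrite <- Ha. rewrite (Ha (inv a) a b). rewrite (proj1 (Hinv a)).
  rewrite (proj1 (Hid b)). apply Hinv.
Qed.

Lemma grp_inv_inv {G} (mul : G->G->G) inv e (HG : is_group mul inv e) a :
  inv (inv a) = a.
Proof.
  symmetry. apply (grp_linv_unique mul inv e HG). apply HG.
Qed.

Lemma word_metric_linv {G} (mul : G->G->G) inv e (HG : is_group mul inv e) S g a b :
  word_metric mul inv e S (mul (inv g) a) (mul (inv g) b) = word_metric mul inv e S a b.
Proof.
  unfold word_metric. f_equal. f_equal.
  rewrite (grp_inv_mul mul inv e HG), (grp_inv_inv mul inv e HG).
  destruct HG as [Ha [Hid Hinv]].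
  rewrite <- Ha. rewrite (Ha g (inv g) b). rewrite (proj2 (Hinv g)).
  rewrite (proj1 (Hid b)). reflexivity.
Qed.

Lemma nat_min (P : nat -> Prop) : (exists n, P n) -> exists n, P n /\ forall m, P m -> (n <= m)%nat.
Proof.
  intros [n Hn]. revert Hn. pattern n. apply (well_founded_ind Wf_nat.lt_wf).
  clear n. intros n IH Hn.
  destruct (classic (exists m, (m < n)%nat /\ P m)) as [[m [Hm Pm]]|Hno].
  - exact (IH m Hm Pm).
  - exists n. split; [exact Hn|]. intros m Pm.
    destruct (Compare_dec.le_lt_dec n m) as [H|H]; [exact H|]. exfalso; apply Hno; eauto.
Qed.

Lemma wl_spec {G} (mul : G->G->G) inv e S (HS : generates mul inv e S) g :
  represents mul inv e S (word_length mul inv e S g) g.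
Proof.
  unfold word_length.
  apply (epsilon_spec (inhabits 0%nat)
    (fun n => represents mul inv e S n g /\
              forall m, represents mul inv e S m g -> (n <= m)%nat)).
  apply nat_min. apply HS.
Qed.

Lemma word_bound {G M} (mul : G->G->G) inv e (dM : M->M->R) (HM : is_metric dM)
  act (Hact : is_isometric_action mul e dM act) (HG : is_group mul inv e)
  (S : list G) x0 (L : R) (HL : forall s, In s S -> dM x0 (act s x0) <= L) :
  forall w, is_word S w -> dM x0 (act (word_eval mul inv e w) x0) <= L * INR (length w).
Proof.
  destruct HM as [Hnn [Hzero [Hsym Htri]]]. destruct Hact as [Ha1 [Ha2 Ha3]].
  induction w as [|[b s] w IH]; intros Hw.
  - change (word_eval mul inv e nil) with e. rewrite Ha1.
    rewrite (proj2 (Hzero x0 x0) eq_refl). simpl. lra.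
  - assert (Hs : In s S) by (apply (Hw (b,s)); left; reflexivity).
    assert (Hw' : is_word S w) by (intros l Hl; apply Hw; right; exact Hl).
    specialize (IH Hw').
    change (word_eval mul inv e ((b,s)::w)) with
      (mul (if b then s else inv s) (word_eval mul inv e w)).
    rewrite Ha2.
    set (t := if b then s else inv s).
    set (u := word_eval mul inv e w) in *.
    assert (Ht : dM x0 (act t x0) <= L).
    { unfold t; destruct b.
      - apply HL; exact Hs.
      - rewrite <- (Ha3 s x0 (act (inv s) x0)). rewrite <- Ha2.
        rewrite (proj2 (proj2 (proj2 HG) s)), Ha1. rewrite Hsym. apply HL; exact Hs. }
    pose proof (Htri x0 (act t x0) (act t (act u x0))) as T.
    rewrite Ha3 in T.
    change (length ((b,s)::w)) with (Datatypes.S (length w)). rewrite S_INR.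
    rewrite Rmult_plus_distr_l, Rmult_1_r. lra.
Qed.

Lemma Lsum_bound {T} (f : T -> R) (Hf : forall s, 0 <= f s) (l : list T) :
  0 <= fold_right (fun s acc => f s + acc) 0 l /\
  forall s, In s l -> f s <= fold_right (fun s acc => f s + acc) 0 l.
Proof.
  induction l as [|a l [IH1 IH2]]; simpl.
  - split; [lra| intros s []].
  - split.
    + pose proof (Hf a); lra.
    + intros s [<-|Hs]. * lra. * pose proof (IH2 s Hs); pose proof (Hf a); lra.
Qed.

Lemma fin_bound (P : nat -> R -> Prop) (Pmono : forall i a b, a <= b -> P i a -> P i b) n :
  (forall i, (i <= n)%nat -> exists B, 0 < B /\ P i B) ->
  exists D, 0 < D /\ forall i, (i <= n)%nat -> P i D.
Proof.
  induction n as [|n IH]; intros H.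
  - destruct (H 0%nat (le_n 0)) as [B [HB HP]]. exists B; split; [exact HB|].
    intros i Hi. replace i with 0%nat by lia. exact HP.
  - destruct IH as [D1 [HD1 HP1]]. { intros i Hi; apply H; lia. }
    destruct (H (S n) (le_n _)) as [B [HB HP]].
    exists (Rmax D1 B). split. { eapply Rlt_le_trans; [exact HD1| apply Rmax_l]. }
    intros i Hi. destruct (Nat.eq_dec i (S n)) as [->|Hne].
    + eapply Pmono; [apply Rmax_r| exact HP].
    + eapply Pmono; [apply Rmax_l| apply HP1; lia].
Qed.

Definition decomp_of {X} (d : X->X->R) (r : R) (Y : X -> Prop) (T : Defs.family X) : Prop :=
  exists U V : Defs.family X, family_in Y U /\ family_in Y V /\ r_disjoint d r U /\
    r_disjoint d r V /\ (forall y, Y y -> exists F, (U F \/ V F) /\ F y) /\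
    (forall F, U F \/ V F -> T F).

Lemma decomp_step {X} (d : X -> X -> R) (r : R) (Y : X -> Prop) (Fam : Defs.family X)
  (Target : Defs.family X) (Hd : r_disjoint d r Fam)
  (HU : forall F, Fam F -> Target (fun x => Y x /\ F x))
  (HV : Target (fun x => Y x /\ forall F, Fam F -> ~ F x)) :
  decomp_of d r Y Target.
Proof.
  exists (fun Z => exists F, Fam F /\ Z = (fun x => Y x /\ F x)).
  exists (fun Z => Z = (fun x => Y x /\ forall F, Fam F -> ~ F x)).
  split; [|split; [|split; [|split; [|split]]]].
  - intros Z [F [HF ->]] x [Hx _]; exact Hx.
  - intros Z -> x [Hx _]; exact Hx.
  - intros Z1 Z2 [F1 [HF1 ->]] [F2 [HF2 ->]] Hns.
    assert (Hn : ~ same_set F1 F2).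
    { intro Hs; apply Hns; intro x; specialize (Hs x); tauto. }
    destruct (Hd F1 F2 HF1 HF2 Hn) as [eps [He Hx]].
    exists eps; split; [exact He|]. intros x y [_ Hx1] [_ Hy1]; apply Hx; assumption.
  - intros Z1 Z2 -> -> Hns. exfalso; apply Hns; intro x; tauto.
  - intros y Hy. destruct (classic (exists F, Fam F /\ F y)) as [[F [HF Fy]]|Hno].
    + exists (fun x => Y x /\ F x). split; [left; exists F; auto| auto].
    + exists (fun x => Y x /\ forall F, Fam F -> ~ F x). split; [right; reflexivity|].
      split; [exact Hy|]. intros F HF Fy; apply Hno; eauto.
  - intros Z [[F [HF ->]] | ->]; auto.
Qed.

Theorem mainTheorem2
  (G : Type) (mul : G -> G -> G) (inv : G -> G) (e : G)
  (HG : is_group mul inv e)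
  (S : list G) (HS : generates mul inv e S)
  (M : Type) (dM : M -> M -> R) (HM : is_metric dM)
  (act : G -> M -> M)
  (Hact : is_isometric_action mul e dM act)
  (Htrans : transitive_action act)
  (x0 : M)
  (HC : asymptotic_property_C dM)
  (n : nat)
  (Hdim : forall Rad : R, 0 < Rad ->
            asdim_le (word_metric mul inv e S) (quasi_stab dM act x0 Rad) n) :
  sFDC (word_metric mul inv e S).
Proof.
  set (dG := word_metric mul inv e S).
  set (p := fun g => act g x0).
  pose (Ls := fold_right (fun s acc => dM x0 (act s x0) + acc) 0 S).
  assert (HLs : 0 <= Ls /\ forall s, In s S -> dM x0 (act s x0) <= Ls).
  { exact (Lsum_bound (fun s => dM x0 (act s x0)) (fun s => proj1 HM _ _) S). }
  pose (L := 1 + Ls).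
  assert (HL0 : 0 < L) by (unfold L; lra).
  assert (Hiso : forall g h, dM (p g) (p h) = dM x0 (act (mul (inv g) h) x0)).
  { intros g h. destruct Hact as [Ha1 [Ha2 Ha3]]. unfold p.
    rewrite <- (Ha3 (inv g) (act g x0) (act h x0)). rewrite <- !Ha2.
    rewrite (proj1 (proj2 (proj2 HG) g)), Ha1. reflexivity. }
  assert (Lip : forall g h, dM (p g) (p h) <= L * dG g h).
  { intros g h. rewrite Hiso.
    destruct (wl_spec mul inv e S HS (mul (inv g) h)) as [w [Hw [Hlen Hev]]].
    rewrite <- Hev. eapply Rle_trans.
    - apply (word_bound mul inv e dM HM act Hact HG S x0 L); [|exact Hw].
      intros s Hs. pose proof (proj2 HLs s Hs). unfold L; lra.
    - unfold dG, word_metric. rewrite Hlen. apply Rle_refl. }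
  assert (Linv : forall g a b, dG (mul (inv g) a) (mul (inv g) b) = dG a b).
  { intros; apply word_metric_linv; exact HG. }
  intros r Hr1 Hrm.
  assert (rmono : forall i j, (1<=i)%nat -> (i<=j)%nat -> r i <= r j).
  { intros i j Hi Hij. induction Hij as [|j Hij IH]; [lra|].
    eapply Rle_trans; [exact IH| apply Hrm; lia]. }
  assert (rnn : forall i, (1 <= i)%nat -> 0 <= r i).
  { intros i Hi. eapply Rle_trans; [exact Hr1| apply rmono; lia]. }
  pose (rc := fun k : nat => L * r (Datatypes.S k) + INR (Datatypes.S k)).
  destruct (HC rc) as [m [Fc [HFc Hcov]]].
  { unfold rc. pose proof (rnn 1%nat (le_n _)). simpl INR.
    pose proof (Rmult_le_pos L (r 1%nat) (Rlt_le _ _ HL0) H). lra. }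
  { intros i. unfold rc. rewrite (S_INR (Datatypes.S i)).
    pose proof (Hrm (Datatypes.S i) ltac:(lia)).
    pose proof (Rmult_le_compat_l L _ _ (Rlt_le _ _ HL0) H). lra. }
  destruct (fin_bound (fun i B => forall F, Fc i F -> diam_le dM F B)) with (n := m)
    as [B [HB0 HB]].
  { intros i a b Hab HP F HF x y Hx Hy. eapply Rle_trans; [apply (HP F HF x y Hx Hy)| exact Hab]. }
  { intros i Hi. apply (HFc i Hi). }
  pose (N := (Datatypes.S m + Datatypes.S n)%nat).
  destruct (Hdim B HB0 (r N + 1)) as [Fams [HFams Hcov2]].
  { pose proof (rnn N ltac:(unfold N; lia)). lra. }
  destruct (fin_bound (fun i D => forall F, Fams i F -> diam_le dG F D)) with (n := n)
    as [D [HD0 HD]].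
  { intros i a b Hab HP F HF x y Hx Hy. eapply Rle_trans; [apply (HP F HF x y Hx Hy)| exact Hab]. }
  { intros i Hi. apply (HFams i Hi). }
  pose (W := quasi_stab dM act x0 B).
  pose (P1 := fun (k:nat) (Z : G -> Prop) =>
     (exists i F, (i < k)%nat /\ Fc i F /\ forall g, Z g -> F (p g)) \/
     (forall g, Z g -> forall i F, (i < k)%nat -> Fc i F -> ~ F (p g))).
  pose (P2 := fun (j:nat) (Z : G -> Prop) => diam_le dG Z D \/
     exists g, (forall h, Z h -> W (mul (inv g) h)) /\
        (forall h, Z h -> forall i F, (i < j)%nat -> Fams i F -> ~ F (mul (inv g) h))).
  pose (Xs := fun (k : nat) (Z : G -> Prop) => if Nat.eqb k 0 then (forall x, Z x)
     else if Nat.leb k (Datatypes.S m) then P1 k Z else P2 (k - Datatypes.S m)%nat Z).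
  assert (XsP1 : forall k Z, (1 <= k <= Datatypes.S m)%nat -> Xs k Z <-> P1 k Z).
  { intros k Z Hk. unfold Xs. destruct k as [|k]; [lia|]. cbn [Nat.eqb].
    rewrite (proj2 (Nat.leb_le _ _) (proj2 Hk)). tauto. }
  assert (XsP2 : forall k Z, (Datatypes.S m < k)%nat -> Xs k Z <-> P2 (k - Datatypes.S m)%nat Z).
  { intros k Z Hk. unfold Xs. destruct k as [|k]; [lia|]. cbn [Nat.eqb].
    rewrite (proj2 (Nat.leb_gt _ _) Hk). tauto. }
  assert (St1 : forall k Z (T : Defs.family G), (k <= m)%nat ->
     (forall Z', P1 (Datatypes.S k) Z' -> T Z') -> P1 k Z -> decomp_of dG (r (Datatypes.S k)) Z T).
  { intros k Z T Hk HT HZ.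
    apply decomp_step with (Fam := fun A => exists F, Fc k F /\ A = (fun g => F (p g))).
    - intros A1 A2 [F1 [HF1 ->]] [F2 [HF2 ->]] Hns.
      assert (Hn : ~ same_set F1 F2).
      { intro Hs; apply Hns; intro x; apply Hs. }
      destruct (proj2 (HFc k Hk) F1 F2 HF1 HF2 Hn) as [eps [He Hx]].
      exists (eps / L). split. { unfold Rdiv; apply Rmult_lt_0_compat; [lra| apply Rinv_0_lt_compat; lra]. }
      intros g h Hg Hh. pose proof (Hx _ _ Hg Hh) as H1. pose proof (Lip g h) as H2.
      unfold rc in H1. pose proof (pos_INR (Datatypes.S k)).
      apply Rmult_le_reg_l with L; [lra|].
      replace (L * (r (Datatypes.S k) + eps / L)) with (L * r (Datatypes.S k) + eps) by (field; lra).
      lra.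
    - intros A [F [HF ->]]. apply HT.
      destruct HZ as [[i [F' [Hi [HF' Hsub]]]] | Hno].
      + left. exists i, F'. split; [lia|]. split; [exact HF'|]. intros g [Hg _]. apply Hsub; exact Hg.
      + left. exists k, F. split; [lia|]. split; [exact HF|]. intros g [_ Hg]; exact Hg.
    - apply HT. destruct HZ as [[i [F' [Hi [HF' Hsub]]]] | Hno].
      + left. exists i, F'. split; [lia|]. split; [exact HF'|]. intros g [Hg _]. apply Hsub; exact Hg.
      + right. intros g [Hg Hc] i F Hi HF HFg.
        destruct (Nat.eq_dec i k) as [->|Hne].
        * apply (Hc (fun g => F (p g))); [exists F; split; auto| exact HFg].
        * apply (Hno g Hg i F); [lia| exact HF| exact HFg]. }
  assert (St2 : forall j Z (T : Defs.family G) rad, (j <= n)%nat -> rad <= r N ->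
     (forall Z', P2 (Datatypes.S j) Z' -> T Z') -> P2 j Z -> decomp_of dG rad Z T).
  { intros j Z T rad Hj Hrad HT HZ.
    destruct HZ as [Hb | [g [HW Hav]]].
    - apply decomp_step with (Fam := fun _ => False).
      + intros A1 A2 [].
      + intros F [].
      + apply HT. left. intros x y [Hx _] [Hy _]. apply Hb; assumption.
    - apply decomp_step with (Fam := fun A => exists F, Fams j F /\ A = (fun h => F (mul (inv g) h))).
      + intros A1 A2 [F1 [HF1 ->]] [F2 [HF2 ->]] Hns.
        assert (Hn : ~ same_set F1 F2).
        { intro Hs; apply Hns; intro x; apply Hs. }
        destruct (proj2 (proj2 (HFams j Hj)) F1 F2 HF1 HF2 Hn) as [eps [He Hx]].
        exists eps. split; [exact He|].
        intros h1 h2 H1 H2. rewrite <- (Linv g). pose proof (Hx _ _ H1 H2). unfold dG. lra.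
      + intros A [F [HF ->]]. apply HT. left. intros h1 h2 [_ H1] [_ H2].
        rewrite <- (Linv g). apply (HD j Hj F HF); assumption.
      + apply HT. right. exists g. split.
        * intros h [Hh _]; apply HW; exact Hh.
        * intros h [Hh Hc] i F Hi HF HFh.
          destruct (Nat.eq_dec i j) as [->|Hne].
          -- apply (Hc (fun h => F (mul (inv g) h))); [exists F; split; auto| exact HFh].
          -- apply (Hav h Hh i F); [lia| exact HF| exact HFh]. }
  assert (T12 : forall Z, P1 (Datatypes.S m) Z -> P2 0%nat Z).
  { intros Z [[i [F [Hi [HF Hsub]]]] | Hno].
    - destruct (classic (exists g, Z g)) as [[g Hg]|Hne].
      + right. exists g. split.
        * intros h Hh. unfold W, quasi_stab. rewrite <- Hiso.
          apply (HB i ltac:(lia) F HF); apply Hsub; assumption.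
        * intros h _ i' F' Hi'. lia.
      + left. intros x y Hx. exfalso; apply Hne; eauto.
    - left. intros x y Hx. exfalso.
      destruct (Hcov (p x) I) as [i [F [Hi [HF HFx]]]].
      apply (Hno x Hx i F); [lia| exact HF| exact HFx]. }
  exists N, Xs. split; [|split].
  - intros A. unfold Xs. simpl. tauto.
  - intros i [Hi1 HiN]. intros Z HZ.
    destruct (Compare_dec.le_lt_dec i (Datatypes.S m)) as [Him | Him].
    + destruct i as [|k]; [lia|].
      replace (Datatypes.S k - 1)%nat with k in HZ by lia.
      apply St1; [lia| |].
      * intros Z' HZ'. apply XsP1; [lia| exact HZ'].
      * destruct k as [|k'].
        -- right. intros; lia.
        -- apply XsP1; [lia| exact HZ].
    + assert (Hj : exists j, i = Datatypes.S (Datatypes.S m + j) /\ (j <= n)%nat)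
        by (exists (i - Datatypes.S (Datatypes.S m))%nat; unfold N in HiN; lia).
      destruct Hj as [j [-> Hjn]].
      replace (Datatypes.S (Datatypes.S m + j) - 1)%nat with (Datatypes.S m + j)%nat in HZ by lia.
      apply St2 with (j := j); [exact Hjn| apply rmono; lia | |].
      * intros Z' HZ'. apply XsP2; [lia|].
        replace (Datatypes.S (Datatypes.S m + j) - Datatypes.S m)%nat with (Datatypes.S j) by lia.
        exact HZ'.
      * destruct j as [|j'].
        -- apply T12. rewrite Nat.add_0_r in HZ. apply XsP1 in HZ; [exact HZ| lia].
        -- apply XsP2 in HZ; [|lia].
           replace (Datatypes.S m + Datatypes.S j' - Datatypes.S m)%nat with (Datatypes.S j') in HZ by lia.
           exact HZ.
  - exists D. split; [exact HD0|]. intros Z HZ.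
    apply XsP2 in HZ; [|unfold N; lia].
    replace (N - Datatypes.S m)%nat with (Datatypes.S n) in HZ by (unfold N; lia).
    destruct HZ as [Hb | [g [HW Hav]]]; [exact Hb|].
    intros x y Hx. exfalso.
    destruct (Hcov2 (mul (inv g) x) (HW x Hx)) as [i [F [Hi [HF HFx]]]].
    apply (Hav x Hx i F); [lia| exact HF| exact HFx].
Qed.
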